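(* The vector $\mathbf{w}:=\mathbf{M}(\mathbf{t}-\mathbf{t}_{\uparrow})/\|\mathbf{M}(\mathbf{t}-\mathbf{t}_{\uparrow})\|_1$ computed in Algorithm 1 is a weight vector, i.e., $\mathbf{w}\geq 0$ and $\|\mathbf{w}\|_1=1$.
   Context: $\mathbf{M}$ is a symmetric positive-definite matrix defining the norm $\|\mathbf{v}\|^2=\mathbf{v}^T\mathbf{M}\mathbf{v}$; $\|\cdot\|_1$ is the 1-norm. In Algorithm 1 (point-oriented Pareto computation), $\mathbf{t}\in\mathbb{R}^{m}$ is the given threshold vector, $\Phi$ is a nonempty finite set of points, $\mathrm{down}(\Phi)$ is the downward closure of the convex hull of $\Phi$, and $\mathbf{t}_{\uparrow}$ is the point $\mathbf{x}\in\mathrm{down}(\Phi)$ minimising $\|\mathbf{t}-\mathbf{x}\|$; $\mathbf{w}$ is computed in an iteration of the while loop (which runs only while $\|\mathbf{t}_{\downarrow}-\mathbf{t}_{\uparrow}\|>\varepsilon$), so that $\mathbf{t}\neq\mathbf{t}_{\uparrow}$, i.e. $\mathbf{t}\notin\mathrm{down}(\Phi)$. *)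

(* Defs.v *)
From HB Require Import structures.
From mathcomp Require Import all_boot all_order all_algebra.
From mathcomp Require Import reals.
Set Implicit Arguments. Unset Strict Implicit. Unset Printing Implicit Defensive.
Import Order.TTheory GRing.Theory Num.Theory.
Local Open Scope ring_scope.

Section Defs.
Variables (R : realType) (m : nat).

Definition sym_posdef (M : 'M[R]_m) : Prop :=
  M^T = M /\ forall v : 'cV[R]_m, v != 0 -> 0 < (v^T *m M *m v) 0 0.

Definition normM (M : 'M[R]_m) (v : 'cV[R]_m) : R :=
  Num.sqrt ((v^T *m M *m v) 0 0).

Definition norm1 (v : 'cV[R]_m) : R := \sum_(i < m) `|v i 0|.

Definition in_conv (Phi : seq 'cV[R]_m) (x : 'cV[R]_m) : Prop :=
  exists lam : 'I_(size Phi) -> R,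
    (forall k, 0 <= lam k) /\ \sum_k lam k = 1 /\
    x = \sum_k lam k *: nth 0 Phi k.

Definition in_down (Phi : seq 'cV[R]_m) (x : 'cV[R]_m) : Prop :=
  exists y, in_conv Phi y /\ forall i, x i 0 <= y i 0.

End Defs.

(* Main.v *)
Require Import Defs.
From HB Require Import structures.
From mathcomp Require Import all_boot all_order all_algebra.
From mathcomp Require Import reals.
From mathcomp Require Import ring lra.
Import Order.TTheory GRing.Theory Num.Theory.
Local Open Scope ring_scope.

Lemma qsym (R : realType) (m : nat) (M : 'M[R]_m) (v e : 'cV[R]_m) :
  M^T = M -> (v^T *m M *m e) 0 0 = (e^T *m M *m v) 0 0.
Proof.
move=> HM.
have H1 : forall A : 'M[R]_1, A 0 0 = A^T 0 0 by move=> A; rewrite mxE.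
rewrite H1.
by rewrite !trmx_mul trmxK HM mulmxA.
Qed.

Lemma qexp (R : realType) (m : nat) (M : 'M[R]_m) (v e : 'cV[R]_m) (s : R) :
  M^T = M ->
  ((v + s *: e)^T *m M *m (v + s *: e)) 0 0 =
  (v^T *m M *m v) 0 0 + 2 * s * (e^T *m M *m v) 0 0 + s ^+ 2 * (e^T *m M *m e) 0 0.
Proof.
move=> HM.
have -> : (v + s *: e)^T = v^T + s *: e^T by apply/matrixP => i j; rewrite !mxE.
rewrite !mulmxDl !mulmxDr. 
rewrite -!scalemxAr -!scalemxAl.
have eD : forall A B : 'M[R]_1, (A + B) 0 0 = A 0 0 + B 0 0 by move=> A B; rewrite mxE.
have eZ : forall (k : R) (A : 'M[R]_1), (k *: A) 0 0 = k * A 0 0 by move=> k A; rewrite mxE.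
rewrite !eD !eZ (qsym _ _ _ v e HM).
ring.
Qed.

Theorem lemma8 (R : realType) (m : nat) (M : 'M[R]_m) (Phi : seq 'cV[R]_m)
    (t tup : 'cV[R]_m) :
  sym_posdef M ->
  Phi != [::] ->
  in_down Phi tup ->
  (forall x, in_down Phi x -> normM M (t - tup) <= normM M (t - x)) ->
  ~ in_down Phi t ->
  let w := (norm1 (M *m (t - tup)))^-1 *: (M *m (t - tup)) in
  (forall i, 0 <= w i 0) /\ norm1 w = 1.
Proof.
move=> [HM Hpd] _ Hdown Hmin Hnt w.
set d := t - tup.
have qge0 : forall v : 'cV[R]_m, 0 <= (v^T *m M *m v) 0 0.
  move=> v; have [->|vn0] := eqVneq v 0.
    by rewrite trmx0 mul0mx mul0mx mxE.
  exact: ltW (Hpd v vn0).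
have dn0 : d != 0.
  apply/eqP => d0; apply: Hnt.
  have -> : t = tup by apply/eqP; rewrite -subr_eq0; apply/eqP.
  exact: Hdown.
have gge0 : forall i, 0 <= (M *m d) i 0.
  move=> i; rewrite leNgt; apply/negP => bneg.
  set b := (M *m d) i 0 in bneg.
  set e : 'cV[R]_m := delta_mx i 0.
  have en0 : e != 0.
    apply/eqP => /matrixP /(_ i 0); rewrite !mxE !eqxx /=.
    by move/eqP; rewrite oner_eq0.
  have qe := Hpd e en0.
  set c := (e^T *m M *m e) 0 0 in qe.
  have eb : (e^T *m M *m d) 0 0 = b.
    by rewrite -mulmxA /e trmx_delta -rowE mxE.
  set s := - b / c.
  have s0 : 0 < s by rewrite /s divr_gt0 // oppr_gt0.
  have sc : s * c = - b by rewrite /s mulrAC -mulrA divff ?mulr1 // gt_eqF.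
  have Hx : in_down Phi (tup - s *: e).
    case: Hdown => y [Hy Hle]; exists y; split => // j.
    apply: le_trans (Hle j); rewrite !mxE lerBlDr lerDl.
    apply: mulr_ge0; first exact: ltW.
    by case: (_ == _); case: (_ == _).
  have := Hmin _ Hx.
  have -> : t - (tup - s *: e) = d + s *: e by rewrite /d opprB addrA addrC addrA [_ + t]addrC.
  rewrite /normM ler_sqrt // qexp // eb => H.
  move: H; set q := (d^T *m M *m d) 0 0 => H.
  have : 0 <= 2 * s * b + s ^+ 2 * c by rewrite -(lerD2l q) addr0 addrA.

  rewrite expr2 -[s * s * c]mulrA sc.
  have : s * b < 0 by rewrite pmulr_rlt0.
  lra.
have gn0 : M *m d != 0.
  apply/eqP => g0; have := Hpd d dn0.
  by rewrite -mulmxA g0 mulmx0 mxE ltxx.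
have N0 : 0 < norm1 (M *m d).
  rewrite lt_def sumr_ge0 // andbT.
  apply/negP => /eqP /psumr_eq0P H.
  have : M *m d = 0.
    apply/matrixP => i j; rewrite (ord1 j) [RHS]mxE; apply/eqP; rewrite -normr_eq0.
    by apply/eqP; apply: H.
  by apply/eqP.
split.
  by move=> i; rewrite mxE mulr_ge0 // invr_ge0 ltW.
rewrite /norm1.
have Ni : 0 <= (norm1 (M *m d))^-1 by rewrite invr_ge0 ltW.
under eq_bigr => i _ do rewrite mxE normrM (ger0_norm Ni).
rewrite -mulr_sumr.
have NN := mulVf (lt0r_neq0 N0).
exact: NN.
Qed.
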